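(* Let $a,b,c,d,P_{\max}>0$ and set $\beta=b(1+dP_{\max})$. Consider the frontier curve $\Phi_1$, given as the graph of $$h(r_2)=\log_2\!\left(1+\frac{aP_{\max}}{1+\frac{b}{c}(1+dP_{\max})(2^{r_2}-1)}\right),\qquad r_2\ge0,$$ which expresses $r_1$ as a function of $r_2$. Let $P_2=\frac1c(1+dP_{\max})(2^{r_2}-1)$ be the corresponding power of user 2. Then $$\operatorname{sign}\big(h''(r_2)\big)=\operatorname{sign}(P_2-Q_2),$$ where $$Q_2=\frac{\Re\!\left(\sqrt{(c-\beta)(c-\beta+acP_{\max})}\right)-\beta}{cb}.$$ In particular, $\Phi_1$ restricted to $P_2\in[0,P_{\max}]$ is convex if $Q_2\le0$ and concave if $Q_2\ge P_{\max}$. If $0<Q_2<P_{\max}$, it has a non-stationary inflection point at $P_2=Q_2$.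
   Context: The channel power gains are normalized by the noise variance: $a$ (direct gain of user 1), $b$ (interference gain from transmitter 2 at receiver 1), $c$ (direct gain of user 2), $d$ (interference gain from transmitter 1 at receiver 2). The rates are $R_1(P_1,P_2)=\log_2\!\left(1+\frac{aP_1}{1+bP_2}\right)$ and $R_2(P_1,P_2)=\log_2\!\left(1+\frac{cP_2}{1+dP_1}\right)$. The curve $\Phi_1$ is the set of rate pairs obtained with $P_1=P_{\max}$ and $P_2$ ranging over $[0,P_{\max}]$. $\Re$ denotes the real part. *)

(* Defs.v *)
From Stdlib Require Import Reals Lra.
Open Scope R_scope.

Definition log2 (x : R) : R := ln x / ln 2.

Definition sgn (x : R) : R :=
  if Rlt_dec 0 x then 1 else if Rlt_dec x 0 then -1 else 0.

(* Real part of the principal complex square root of a real number x: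
   sqrt x if x >= 0, and 0 if x < 0 (the root is then purely imaginary). *)
Definition re_sqrt (x : R) : R := if Rle_dec 0 x then sqrt x else 0.

Definition hPhi1 (a b c d Pmax r2 : R) : R :=
  log2 (1 + a * Pmax / (1 + b / c * (1 + d * Pmax) * (Rpower 2 r2 - 1))).

Definition P2_of (c d Pmax r2 : R) : R := / c * (1 + d * Pmax) * (Rpower 2 r2 - 1).

Definition beta_of (b d Pmax : R) : R := b * (1 + d * Pmax).

Definition Q2_of (a b c d Pmax : R) : R :=
  let beta := beta_of b d Pmax in
  (re_sqrt ((c - beta) * (c - beta + a * c * Pmax)) - beta) / (c * b).

(* the rate r2 at which P2 = Pmax, i.e. the end of Phi_1 *)
Definition r2max (c d Pmax : R) : R := log2 (1 + c * Pmax / (1 + d * Pmax)).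

Definition convex_on (f : R -> R) (lo hi : R) : Prop :=
  forall x y t, lo <= x <= hi -> lo <= y <= hi -> 0 <= t <= 1 ->
    f (t * x + (1 - t) * y) <= t * f x + (1 - t) * f y.

Definition concave_on (f : R -> R) (lo hi : R) : Prop :=
  forall x y t, lo <= x <= hi -> lo <= y <= hi -> 0 <= t <= 1 ->
    t * f x + (1 - t) * f y <= f (t * x + (1 - t) * y).

(* Main.v *)
Require Import Defs.
From Stdlib Require Import Reals.
From Stdlib Require Import Lra.
From Coquelicot Require Import Coquelicot.
Open Scope R_scope.

Lemma ln2_pos : 0 < ln 2.
Proof. rewrite <- ln_1. apply ln_increasing; lra. Qed.

Lemma sgn_pos_mul p z : 0 < p -> sgn (p * z) = sgn z.
Proof.
  intros Hp. unfold sgn.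
  destruct (Rlt_dec 0 z) as [H|H].
  - destruct (Rlt_dec 0 (p*z)) as [H1|H1]; [reflexivity|].
    exfalso; apply H1; apply Rmult_lt_0_compat; lra.
  - destruct (Rlt_dec z 0) as [H2|H2].
    + destruct (Rlt_dec 0 (p*z)) as [H1|H1]; [exfalso; nra|].
      destruct (Rlt_dec (p*z) 0) as [H3|H3]; [reflexivity|exfalso; nra].
    + assert (z = 0) by lra. subst z. rewrite Rmult_0_r.
      destruct (Rlt_dec 0 0); [lra|]. destruct (Rlt_dec 0 0); [lra|]. reflexivity.
Qed.

Lemma sgn_key t D : 0 < t -> sgn (t^2 - D) = sgn (t - re_sqrt D).
Proof.
  intros Ht. unfold re_sqrt. destruct (Rle_dec 0 D) as [HD|HD].
  - pose proof (sqrt_sqrt D HD). pose proof (sqrt_pos D).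
    replace (t^2 - D) with ((t + sqrt D) * (t - sqrt D)) by nra.
    apply sgn_pos_mul. lra.
  - unfold sgn. destruct (Rlt_dec 0 (t^2 - D)) as [H|H]; [|exfalso; nra].
    destruct (Rlt_dec 0 (t - 0)); [reflexivity|lra].
Qed.

Lemma sgn_0 x : sgn x = 0 -> x = 0.
Proof. unfold sgn. destruct (Rlt_dec 0 x); [lra|]. destruct (Rlt_dec x 0); lra. Qed.
Lemma sgn_m1 x : sgn x = -1 -> x < 0.
Proof. unfold sgn. destruct (Rlt_dec 0 x); [lra|]. destruct (Rlt_dec x 0); lra. Qed.
Lemma sgn_1 x : sgn x = 1 -> 0 < x.
Proof. unfold sgn. destruct (Rlt_dec 0 x); [lra|]. destruct (Rlt_dec x 0); lra. Qed.
Lemma sgn_of_neg x : x < 0 -> sgn x = -1.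
Proof. unfold sgn. intros. destruct (Rlt_dec 0 x); [lra|]. destruct (Rlt_dec x 0); lra. Qed.
Lemma sgn_of_pos x : 0 < x -> sgn x = 1.
Proof. unfold sgn. intros. destruct (Rlt_dec 0 x); lra. Qed.
Lemma sgn_nonneg w z : 0 <= z -> sgn w = sgn z -> 0 <= w.
Proof. unfold sgn. intros. destruct (Rlt_dec 0 z); destruct (Rlt_dec 0 w); try lra;
  destruct (Rlt_dec z 0); destruct (Rlt_dec w 0); lra. Qed.
Lemma sgn_nonpos w z : z <= 0 -> sgn w = sgn z -> w <= 0.
Proof. unfold sgn. intros. destruct (Rlt_dec 0 z); destruct (Rlt_dec 0 w); try lra;
  destruct (Rlt_dec z 0); destruct (Rlt_dec w 0); lra. Qed.

Lemma Rpower2_log2 z : 0 < z -> Rpower 2 (log2 z) = z.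
Proof.
  intros Hz. pose proof ln2_pos. unfold Rpower, log2.
  replace (ln z / ln 2 * ln 2) with (ln z) by (field; lra). apply exp_ln; auto.
Qed.

Lemma convex_core f f1 f2 lo hi x y t :
  (forall r, lo <= r <= hi -> derivable_pt_lim f r (f1 r) /\ derivable_pt_lim f1 r (f2 r)) ->
  (forall r, lo <= r <= hi -> 0 <= f2 r) ->
  lo <= x -> y <= hi -> x < y -> 0 < t < 1 ->
  f (t * x + (1 - t) * y) <= t * f x + (1 - t) * f y.
Proof.
  intros Hd H2 Hx Hy Hxy Ht.
  set (z := t * x + (1 - t) * y).
  assert (Hz1 : x < z) by (unfold z; nra).
  assert (Hz2 : z < y) by (unfold z; nra).
  destruct (MVT_cor2 f f1 x z Hz1) as [c1 [E1 C1]].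
  { intros c Hc. apply Hd; lra. }
  destruct (MVT_cor2 f f1 z y Hz2) as [c2 [E2 C2]].
  { intros c Hc. apply Hd; lra. }
  assert (Hm : f1 c1 <= f1 c2).
  { destruct (MVT_cor2 f1 f2 c1 c2) as [c3 [E3 C3]]; [lra| |].
    - intros c Hc. apply Hd; lra.
    - assert (0 <= f2 c3) by (apply H2; lra). nra. }
  assert (Ez1 : z - x = (1 - t) * (y - x)) by (unfold z; ring).
  assert (Ez2 : y - z = t * (y - x)) by (unfold z; ring).
  rewrite Ez1 in E1. rewrite Ez2 in E2.
  assert (0 <= t * (1 - t) * (y - x) * (f1 c2 - f1 c1)).
  { apply Rmult_le_pos; [|lra]. apply Rmult_le_pos; [|lra]. nra. }
  nra.
Qed.

Lemma convex_from_d2 f f1 f2 lo hi :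
  (forall r, lo <= r <= hi -> derivable_pt_lim f r (f1 r) /\ derivable_pt_lim f1 r (f2 r)) ->
  (forall r, lo <= r <= hi -> 0 <= f2 r) ->
  convex_on f lo hi.
Proof.
  intros Hd H2 x y t Hx Hy Ht.
  destruct (Req_dec t 0) as [->|Ht0].
  { replace (0 * x + (1 - 0) * y) with y by ring. lra. }
  destruct (Req_dec t 1) as [->|Ht1].
  { replace (1 * x + (1 - 1) * y) with x by ring. lra. }
  destruct (Rtotal_order x y) as [Hxy|[Hxy|Hxy]].
  - apply (convex_core f f1 f2 lo hi); auto; lra.
  - subst y. replace (t * x + (1 - t) * x) with x by ring. lra.
  - pose proof (convex_core f f1 f2 lo hi y x (1 - t) Hd H2 ltac:(lra) ltac:(lra) Hxy ltac:(lra)).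
    replace (t * x + (1 - t) * y) with ((1 - t) * y + (1 - (1 - t)) * x) by ring. lra.
Qed.

Lemma concave_from_d2 f f1 f2 lo hi :
  (forall r, lo <= r <= hi -> derivable_pt_lim f r (f1 r) /\ derivable_pt_lim f1 r (f2 r)) ->
  (forall r, lo <= r <= hi -> f2 r <= 0) ->
  concave_on f lo hi.
Proof.
  intros Hd H2 x y t Hx Hy Ht.
  pose proof (convex_from_d2 (fun r => - f r) (fun r => - f1 r) (fun r => - f2 r) lo hi) as C.
  assert (convex_on (fun r => - f r) lo hi) as C'.
  { apply C.
    - intros r Hr. destruct (Hd r Hr) as [D1 D2]. split.
      + exact (derivable_pt_lim_opp f r (f1 r) D1).
      + exact (derivable_pt_lim_opp f1 r (f2 r) D2).
    - intros r Hr. pose proof (H2 r Hr). lra. }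
  pose proof (C' x y t Hx Hy Ht). simpl in *. lra.
Qed.

Definition kk b c d P := b / c * (1 + d * P).
Definition EE r := exp (r * ln 2).
Definition YY b c d P r := 1 + kk b c d P * (EE r - 1).
Definition H1 a b c d P r :=
  - (a * P) * kk b c d P * EE r / (YY b c d P r * (YY b c d P r + a * P)).
Definition H2 a b c d P r :=
  a * P * ln 2 * kk b c d P * EE r *
   (YY b c d P r ^ 2 + 2 * (kk b c d P - 1) * YY b c d P r + (kk b c d P - 1) * (a * P))
   / (YY b c d P r * (YY b c d P r + a * P)) ^ 2.

Theorem mainTheorem7 (a b c d Pmax : R)
  (ha : 0 < a) (hb : 0 < b) (hc : 0 < c) (hd : 0 < d) (hP : 0 < Pmax) :
  let h := hPhi1 a b c d Pmax in
  let Q2 := Q2_of a b c d Pmax in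
  exists (h1 h2 : R -> R) (eps : R), 0 < eps /\
    (* h1, h2 are the first and second derivatives of h on a neighbourhood of r2 >= 0 *)
    (forall r, - eps < r -> derivable_pt_lim h r (h1 r) /\ derivable_pt_lim h1 r (h2 r)) /\
    (* main claim *)
    (forall r2, 0 <= r2 -> sgn (h2 r2) = sgn (P2_of c d Pmax r2 - Q2)) /\
    (* consequences on the part of Phi_1 with P2 in [0, Pmax], i.e. r2 in [0, r2max] *)
    (Q2 <= 0 -> convex_on h 0 (r2max c d Pmax)) /\
    (Pmax <= Q2 -> concave_on h 0 (r2max c d Pmax)) /\
    (0 < Q2 < Pmax ->
       exists rs, 0 < rs < r2max c d Pmax /\ P2_of c d Pmax rs = Q2 /\
         h1 rs <> 0 /\ h2 rs = 0 /\
         (forall r, 0 <= r < rs -> h2 r < 0) /\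
         (forall r, rs < r <= r2max c d Pmax -> 0 < h2 r)).
Proof.
  cbv zeta.
  pose proof ln2_pos as L2.
  assert (HdP : 0 < d * Pmax) by (apply Rmult_lt_0_compat; lra).
  set (k := kk b c d Pmax).
  assert (Hk : 0 < k).
  { unfold k, kk. apply Rmult_lt_0_compat; [apply Rdiv_lt_0_compat; lra| nra]. }
  set (eps := ln (1 + / k) / ln 2).
  assert (Heps : 0 < eps).
  { unfold eps. apply Rdiv_lt_0_compat; auto. rewrite <- ln_1. apply ln_increasing; [lra|].
    pose proof (Rinv_0_lt_compat k Hk). lra. }
  assert (HE : forall r, 0 < EE r) by (intros; unfold EE; apply exp_pos).
  assert (HY : forall r, - eps < r -> 0 < YY b c d Pmax r).
  { intros r Hr. unfold YY. fold k.
    assert (Hz : 0 < 1 + / k) by (pose proof (Rinv_0_lt_compat k Hk); lra).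
    assert (HEr : / (1 + / k) < EE r).
    { unfold EE. rewrite <- (exp_ln (1 + / k)) by auto. rewrite <- exp_Ropp.
      apply exp_increasing.
      assert (ln (1 + / k) = eps * ln 2) by (unfold eps; field; lra).
      rewrite H. nra. }
    assert (1 - k + k * / (1 + / k) = / (k + 1)) by (field; lra).
    assert (0 < / (k + 1)) by (apply Rinv_0_lt_compat; lra).
    nra. }
  assert (HD : forall r, - eps < r ->
    derivable_pt_lim (hPhi1 a b c d Pmax) r (H1 a b c d Pmax r) /\
    derivable_pt_lim (H1 a b c d Pmax) r (H2 a b c d Pmax r)).
  { intros r Hr. pose proof (HY r Hr) as Y0. pose proof (HE r) as E0.
    unfold YY, EE in Y0, E0. fold k in Y0. split.
    - apply is_derive_Reals. unfold hPhi1, log2, Rpower, H1, YY, EE. fold k.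
      replace (b / c * (1 + d * Pmax)) with k by reflexivity.
      auto_derive.
      + split; [lra|]. split; [|exact I].
        assert (0 < a * Pmax / (1 + k * (exp (r * ln 2) - 1))).
        { apply Rdiv_lt_0_compat; nra. }
        unfold Rdiv, Rminus in H. lra.
      + field. repeat split; try lra.
        * nra.
    - apply is_derive_Reals. unfold H1, H2, YY, EE. fold k.
      auto_derive.
        + apply Rgt_not_eq; apply Rmult_lt_0_compat; nra.
      + field. split; nra. }
  exists (H1 a b c d Pmax), (H2 a b c d Pmax), eps.
  assert (HS : forall r, - eps < r ->
    sgn (H2 a b c d Pmax r) = sgn (P2_of c d Pmax r - Q2_of a b c d Pmax)).
  { intros r Hr. pose proof (HY r Hr) as Y0. pose proof (HE r) as E0.
    set (beta := b * (1 + d * Pmax)).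
    set (D0 := (c - beta) * (c - beta + a * c * Pmax)).
    assert (E1 : H2 a b c d Pmax r =
      (a * Pmax * ln 2 * k * EE r / (c ^ 2 * (YY b c d Pmax r * (YY b c d Pmax r + a * Pmax)) ^ 2))
      * ((beta * EE r) ^ 2 - D0)).
    { unfold H2. fold k. unfold YY in Y0 |- *. fold k in Y0 |- *. unfold D0, beta, k, kk.
      unfold k, kk in Y0.
      assert (HcY : 0 < c + b * (1 + d * Pmax) * (EE r - 1)).
      { replace (c + b * (1 + d * Pmax) * (EE r - 1)) with (c * (1 + b / c * (1 + d * Pmax) * (EE r - 1))) by (field; lra).
        apply Rmult_lt_0_compat; lra. }
      field. assert (0 < a * Pmax * c) by (repeat apply Rmult_lt_0_compat; lra). repeat split; apply Rgt_not_eq; lra. }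
    assert (E2 : P2_of c d Pmax r - Q2_of a b c d Pmax = / (c * b) * (beta * EE r - re_sqrt D0)).
    { unfold P2_of, Q2_of, beta_of, Rpower. cbv zeta. fold beta. fold D0. unfold EE.
      unfold beta. field. lra. }
    rewrite E1, E2, sgn_pos_mul, sgn_pos_mul.
    - apply sgn_key. unfold beta. assert (0 < d * Pmax) by (apply Rmult_lt_0_compat; lra). apply Rmult_lt_0_compat; [apply Rmult_lt_0_compat; lra|auto].
    - apply Rinv_0_lt_compat; nra.
    - apply Rdiv_lt_0_compat.
      + assert (0 < a * Pmax) by (apply Rmult_lt_0_compat; lra). assert (0 < a * Pmax * ln 2) by (apply Rmult_lt_0_compat; lra). assert (0 < a * Pmax * ln 2 * k) by (apply Rmult_lt_0_compat; lra). apply Rmult_lt_0_compat; lra.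
      + apply Rmult_lt_0_compat; [nra|]. apply pow_lt. apply Rmult_lt_0_compat; [exact Y0|]. assert (0 < a * Pmax) by (apply Rmult_lt_0_compat; lra). lra. }
  assert (HPmono : forall r r', r < r' -> P2_of c d Pmax r < P2_of c d Pmax r').
  { intros r r' Hrr. unfold P2_of.
    pose proof (Rpower_lt 2 r r' ltac:(lra) Hrr).
    assert (0 < / c * (1 + d * Pmax)) by (apply Rmult_lt_0_compat; [apply Rinv_0_lt_compat|]; nra).
    nra. }
  assert (HP0 : P2_of c d Pmax 0 = 0).
  { unfold P2_of. rewrite Rpower_O by lra. ring. }
  assert (HPm : P2_of c d Pmax (r2max c d Pmax) = Pmax).
  { unfold P2_of, r2max. rewrite Rpower2_log2.
    - field. split; apply Rgt_not_eq; lra.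
    - assert (0 < c * Pmax / (1 + d * Pmax)) by (apply Rdiv_lt_0_compat; nra). lra. }
  assert (Hr2 : 0 < r2max c d Pmax).
  { destruct (Rle_dec (r2max c d Pmax) 0) as [H|H]; [|lra].
    destruct H as [H|H].
    - pose proof (HPmono _ _ H). lra.
    - rewrite H in HPm. lra. }
  assert (HPle : forall r r', r <= r' -> P2_of c d Pmax r <= P2_of c d Pmax r').
  { intros r r' [H|H]; [left; auto|subst; lra]. }
  split; [exact Heps|].
  split; [exact HD|].
  split; [intros r Hr; apply HS; lra|].
  split.
  { intros HQ. apply (convex_from_d2 _ (H1 a b c d Pmax) (H2 a b c d Pmax)).
    - intros r Hr. apply HD; lra.
    - intros r Hr. apply (sgn_nonneg _ (P2_of c d Pmax r - Q2_of a b c d Pmax)).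
      + pose proof (HPle 0 r ltac:(lra)). lra.
      + apply HS; lra. }
  split.
  { intros HQ. apply (concave_from_d2 _ (H1 a b c d Pmax) (H2 a b c d Pmax)).
    - intros r Hr. apply HD; lra.
    - intros r Hr. apply (sgn_nonpos _ (P2_of c d Pmax r - Q2_of a b c d Pmax)).
      + pose proof (HPle r _ (proj2 Hr)). lra.
      + apply HS; lra. }
  intros [HQ1 HQ2].
  set (Q := Q2_of a b c d Pmax) in *.
  set (z := 1 + c * Q / (1 + d * Pmax)).
  assert (Hz : 0 < z) by (unfold z; assert (0 < c * Q / (1 + d * Pmax)) by (apply Rdiv_lt_0_compat; nra); lra).
  exists (log2 z).
  assert (HPs : P2_of c d Pmax (log2 z) = Q).
  { unfold P2_of. rewrite Rpower2_log2 by auto. unfold z. field. lra. }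
  assert (Hrs1 : 0 < log2 z).
  { destruct (Rle_dec (log2 z) 0) as [H|H]; [|lra].
    pose proof (HPle _ _ H). lra. }
  assert (Hrs2 : log2 z < r2max c d Pmax).
  { destruct (Rle_dec (r2max c d Pmax) (log2 z)) as [H|H]; [|lra].
    pose proof (HPle _ _ H). lra. }
  split; [lra|]. split; [exact HPs|]. split.
  { unfold H1. pose proof (HY (log2 z) ltac:(lra)) as Yz. pose proof (HE (log2 z)) as Ez.
    fold k. intro Hzero.
    assert (0 < a * Pmax) by (apply Rmult_lt_0_compat; lra).
    assert (0 < a * Pmax * k * EE (log2 z) / (YY b c d Pmax (log2 z) * (YY b c d Pmax (log2 z) + a * Pmax))).
    { apply Rdiv_lt_0_compat.
      - apply Rmult_lt_0_compat; [apply Rmult_lt_0_compat|]; lra.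
      - apply Rmult_lt_0_compat; lra. }
    unfold Rdiv in *. lra. }
  split.
  { apply sgn_0. rewrite HS by lra. rewrite HPs. unfold sgn.
    replace (Q - Q) with 0 by ring. destruct (Rlt_dec 0 0); [lra|].
    destruct (Rlt_dec 0 0); [lra|]. reflexivity. }
  split.
  { intros r Hr. apply sgn_m1. rewrite HS by lra. apply sgn_of_neg.
    pose proof (HPmono r (log2 z) ltac:(lra)). lra. }
  { intros r Hr. apply sgn_1. rewrite HS by lra. apply sgn_of_pos.
    pose proof (HPmono (log2 z) r ltac:(lra)). lra. }
Qed.
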